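(* Optimum Stack Generation over an alphabet $\Sigma$ can be reduced to the scored parsing problem of a bounded-difference scored grammar in Chomsky normal form. The size of the grammar is polynomial in $|\Sigma|$, and the input string is not changed by the reduction.
   Context: Optimum Stack Generation: given a finite alphabet $\Sigma$ and a string $\sigma\in\Sigma^*$, starting from an empty stack, find the minimum length of a sequence of operations push$(c)$ ($c\in\Sigma$), emit (print the top symbol) and pop that prints exactly $\sigma$ and ends with an empty stack. A scored grammar is a CFG whose productions $p$ carry non-negative integer scores $s(p)$; $s(X,\sigma)$ is the minimum total score of a derivation $X\to^*\sigma$ ($\infty$ if none). It is $W$-bounded-difference if for every non-terminal $X$, terminal $x$, non-empty terminal string $\sigma$: $|s(X,\sigma)-s(X,\sigma x)|\le W$ and $|s(X,\sigma)-s(X,x\sigma)|\le W$; bounded-difference means $W=O(1)$. Chomsky normal form: productions $Z\to XY$, $Z\to c$, $S\to\varepsilon$ with $X,Y$ non-terminals different from the start symbol $S$. The scored parsing problem asks for $s(S,\sigma)$ for the start symbol $S$. *)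

(* Defs.v *)
From mathcomp Require Import all_boot.
Set Implicit Arguments. Unset Strict Implicit. Unset Printing Implicit Defensive.

Inductive stack_op (Sigma : Type) := Push of Sigma | Emit | Pop.
Arguments Emit {Sigma}. Arguments Pop {Sigma}.

(* [run st ops] executes [ops] from stack [st] (head = top of stack) and
   returns the final stack and the printed string; None if an emit or pop
   is performed on an empty stack. *)
Fixpoint run (Sigma : Type) (st : seq Sigma) (ops : seq (stack_op Sigma))
  : option (seq Sigma * seq Sigma) :=
  match ops with
  | [::] => Some (st, [::])
  | Push c :: ops' => run (c :: st) ops'
  | Emit :: ops' =>
      match st with
      | [::] => None
      | c :: _ => omap (fun p => (p.1, c :: p.2)) (run st ops')
      end
  | Pop :: ops' =>
      match st with
      | [::] => None
      | _ :: st' => run st' ops'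
      end
  end.

Definition generates (Sigma : Type) (ops : seq (stack_op Sigma)) (sigma : seq Sigma) :=
  run [::] ops = Some ([::], sigma).

Definition osg_opt (Sigma : Type) (sigma : seq Sigma) (m : nat) : Prop :=
  (exists ops, generates ops sigma /\ size ops = m) /\
  (forall ops, generates ops sigma -> m <= size ops).

Record scored_cnf (Sigma : Type) := ScoredCNF {
  nt : finType;
  start : nt;
  bin_prods : seq (nt * nt * nt * nat);       (* (Z, X, Y, s) : Z -> X Y, score s *)
  term_prods : seq (nt * Sigma * nat);        (* (Z, c, s)    : Z -> c,   score s *)
  eps_prod : option nat                       (* Some s : S -> eps, score s *)
}.

Definition is_cnf (Sigma : Type) (G : scored_cnf Sigma) : Prop :=
  forall Z X Y s, (Z, X, Y, s) \in bin_prods G -> X != start G /\ Y != start G.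

Inductive derives (Sigma : eqType) (G : scored_cnf Sigma) : nt G -> seq Sigma -> nat -> Prop :=
  | der_term Z c s : (Z, c, s) \in term_prods G -> @derives Sigma G Z [:: c] s
  | der_bin Z X Y s u v s1 s2 : (Z, X, Y, s) \in bin_prods G ->
      @derives Sigma G X u s1 -> @derives Sigma G Y v s2 -> @derives Sigma G Z (u ++ v) (s + s1 + s2)
  | der_eps s : eps_prod G = Some s -> @derives Sigma G (start G) [::] s.

Definition min_score (Sigma : eqType) (G : scored_cnf Sigma) (X : nt G) (w : seq Sigma) (m : nat) :=
  @derives _ G X w m /\ forall m', @derives _ G X w m' -> m <= m'.

Definition underivable (Sigma : eqType) (G : scored_cnf Sigma) (X : nt G) (w : seq Sigma) :=
  forall m, ~ @derives _ G X w m.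

(* |s(X,u) - s(X,v)| <= W, with the convention that two infinite values are
   within W of each other and an infinite and a finite value are not. *)
Definition score_close (Sigma : eqType) (G : scored_cnf Sigma) (W : nat) (X : nt G) (u v : seq Sigma) :=
  (@underivable _ G X u /\ @underivable _ G X v) \/
  (exists m1 m2, @min_score _ G X u m1 /\ @min_score _ G X v m2 /\ m1 <= m2 + W /\ m2 <= m1 + W).

Definition bounded_diff (Sigma : eqType) (W : nat) (G : scored_cnf Sigma) : Prop :=
  forall (X : nt G) (x : Sigma) (w : seq Sigma), w != [::] ->
    @score_close _ G W X w (rcons w x) /\ @score_close _ G W X w (x :: w).

Definition grammar_size (Sigma : Type) (G : scored_cnf Sigma) : nat :=
  #|nt G| + size (bin_prods G) + size (term_prods G) + (if eps_prod G is Some _ then 1 else 0).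

(* Main.v *)
Require Import Defs.
From mathcomp Require Import all_boot.
From mathcomp Require Import zify.
From Stdlib Require Import Classical.
Set Implicit Arguments. Unset Strict Implicit. Unset Printing Implicit Defensive.

Section Proof.
Variable Sigma : finType.
Local Notation N := (option (option Sigma)).
Local Notation S := (None : N).
Local Notation F := (Some None : N).
Local Notation T d := (Some (Some d) : N).

Definition bscore (Z X : N) : nat := if (Z == X) || (X == F) then 0 else 2.
Definition tscore (Z : N) (c : Sigma) : nat := if Z == T c then 1 else 3.

Definition bins : seq (N * N * N * nat) :=
  [seq (t.1.1, t.1.2, t.2, bscore t.1.1 t.1.2) |
     t <- enum [pred t : N * N * N | (t.1.2 == t.2) && (t.1.2 != None)]].
Definition terms : seq (N * Sigma * nat) :=
  [seq (t.1, t.2, tscore t.1 t.2) | t <- enum {: N * Sigma}].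

Definition G : scored_cnf Sigma := @ScoredCNF Sigma N S bins terms (Some 0).

Lemma mem_bin (Z X Y : N) s : (Z, X, Y, s) \in bins -> [/\ Y = X, X != S & s = bscore Z X].
Proof.
case/mapP => [[[a b] c]]; rewrite mem_enum inE /= => /andP[/eqP eb hb] [-> -> -> ->].
by subst.
Qed.

Lemma bin_in (Z X : N) : X != S -> (Z, X, X, bscore Z X) \in bins.
Proof.
move=> hX; apply/mapP; exists (Z, X, X) => //; by rewrite mem_enum inE /= eqxx hX.
Qed.

Lemma mem_term (Z : N) c s : (Z, c, s) \in terms -> s = tscore Z c.
Proof. by case/mapP => [[a b]] _ [-> -> ->]. Qed.

Lemma term_in (Z : N) c : (Z, c, tscore Z c) \in terms.
Proof. by apply/mapP; exists (Z, c); rewrite ?mem_enum. Qed.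

Lemma run_cat (st : seq Sigma) o1 o2 : run st (o1 ++ o2) =
  obind (fun p => omap (fun q => (q.1, p.2 ++ q.2)) (run p.1 o2)) (run st o1).
Proof.
elim: o1 st => [|[c| |] o IH] st /=.
- by case: (run st o2) => [[]|].
- by rewrite IH.
- case: st => [|h t] //=; rewrite IH; case: (run (h :: t) o) => [[a b]|] //=.
  by case: (run a o2) => [[]|].
- by case: st => [|h t] //=.
Qed.


Definition bot (X : N) : seq Sigma := if X is Some (Some d) then [:: d] else [::].
Definition sem (X : N) ops (w : seq Sigma) :=
  forall st, run (bot X ++ st) ops = Some (bot X ++ st, w).

Lemma run_catS (st st1 : seq Sigma) o1 o2 w1 :
  run st o1 = Some (st1, w1) ->
  run st (o1 ++ o2) = omap (fun q => (q.1, w1 ++ q.2)) (run st1 o2).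
Proof. by move=> h; rewrite run_cat h. Qed.

Lemma sound (X : N) w s : @derives _ G X w s -> exists ops, size ops = s /\ sem X ops w.
Proof.
elim=> {X w s}.
- move=> Z c s /mem_term ->; rewrite /tscore.
  case: eqP => [->|_].
  + by exists [:: Emit] => //; split => // st /=.
  + by exists [:: Push c; Emit; Pop]; split => // st /=.
- move=> Z X Y s u v s1 s2 /mem_bin [-> hX ->] _ [o1 [h1 e1]] _ [o2 [h2 e2]].
  rewrite /bscore; case: ifP => hZ.
  + exists (o1 ++ o2); split; first by rewrite size_cat h1 h2.
    move=> st; case/orP: hZ => [/eqP ->|/eqP hF].
    * by rewrite (run_catS _ (e1 st)) e2.
    * have e1' := e1 (bot Z ++ st); have e2' := e2 (bot Z ++ st).
      rewrite hF /= in e1' e2'.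
      by rewrite (run_catS _ e1') e2'.
  + move: hZ hX; case: X e1 e2 => [[e|]|] e1 e2; rewrite ?eqxx ?orbT //= => _ _.
    exists (Push e :: o1 ++ o2 ++ [:: Pop]); split.
      by rewrite /= !size_cat h1 h2 /=; lia.
    move=> st /=.
    have e1' := e1 (bot Z ++ st); have e2' := e2 (bot Z ++ st).
    by rewrite (run_catS _ e1') (run_catS _ e2') /= cats0.
- move=> s /= [<-]; exists [::]; split => // st /=.
Qed.

Lemma root (X Z : N) w s : @derives _ G X w s -> X != S ->
  exists2 s', s' <= s + (if X == F then 0 else 2) & @derives _ G Z w s'.
Proof.
case=> {X w s}.
- move=> Z0 c s /mem_term -> _; exists (tscore Z c); last exact: (@der_term _ G _ _ _ (term_in Z c)).
  rewrite /tscore; case: (Z0 =P F) => [->|_] /=; case: ifP => _ //; case: ifP => //.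
- move=> Z0 X Y s u v s1 s2 /mem_bin [-> hX ->] d1 d2 _.
  exists (bscore Z X + s1 + s2); last exact: (@der_bin _ G _ _ _ _ _ _ _ _ (bin_in Z hX) d1 d2).
  have b2 : forall A B : N, bscore A B <= 2 by move=> A B; rewrite /bscore; case: ifP.
  case: (Z0 =P F) => [->|_]; last by have := b2 Z X; lia.
  rewrite /= /bscore; case: (X =P F) => [->|hXF]; first by rewrite !orbT addn0.
  rewrite !orbF addn0; case: (Some None =P X) => [e|_]; first by case: hXF.
  by case: ifP => _; lia.
- by move=> s _; rewrite /G /=.
Qed.

Definition cov (X : N) (w : seq Sigma) (c : nat) :=
  w = [::] \/ exists2 s, s <= c & @derives _ G X w s.

Lemma cov_mono X w c c' : c <= c' -> cov X w c -> cov X w c'.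
Proof.
move=> le [->|[s hs d]]; [by left | right; exists s => //; exact: leq_trans le].
Qed.

Lemma cov_root X Z w c : X != S -> cov X w c -> cov Z w (c + (if X == F then 0 else 2)).
Proof.
move=> hX [->|[s hs d]]; first by left.
have [s' hs' d'] := root Z d hX; right; exists s' => //.
apply: leq_trans hs' _; by rewrite leq_add2r.
Qed.

Lemma cov_cat X w1 w2 c1 c2 : X != S -> cov X w1 c1 -> cov X w2 c2 -> cov X (w1 ++ w2) (c1 + c2).
Proof.
move=> hX [->|[s1 h1 d1]]; first by apply: cov_mono; rewrite leq_addl.
move=> [->|[s2 h2 d2]]; first by rewrite cats0; apply: cov_mono (_ : c1 <= c1 + c2) _;
  [rewrite leq_addr | right; exists s1].
right; exists (bscore X X + s1 + s2); last exact: (@der_bin _ G _ _ _ _ _ _ _ _ (bin_in X hX) d1 d2).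
by rewrite /bscore eqxx /=; lia.
Qed.

Lemma split_pop (p : seq Sigma) e st st' o w :
  run (p ++ e :: st) o = Some (st', w) -> size st' <= size st ->
  exists o1 o2 w1 w2, [/\ o = o1 ++ Pop :: o2, run (rcons p e) o1 = Some ([:: e], w1),
    run st o2 = Some (st', w2) & w = w1 ++ w2].
Proof.
elim: o p w => [|[c| |] o IH] p w /=.
- by case=> <- _; rewrite size_cat /=; lia.
- move=> h hs; have [o1 [o2 [w1 [w2 [-> r1 r2 ->]]]]] := IH (c :: p) w h hs.
  by exists (Push c :: o1), o2, w1, w2.
- case: p => [|h p] /=.
  + case E: (run (e :: st) o) => [[a b]|] //= [ea eb] hs; subst a w.
    have [o1 [o2 [w1 [w2 [-> r1 r2 ->]]]]] := IH [::] b E hs.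
    by exists (Emit :: o1), o2, (e :: w1), w2; rewrite /= r1.
  + case E: (run (h :: p ++ e :: st) o) => [[a b]|] //= [ea eb] hs; subst a w.
    have [o1 [o2 [w1 [w2 [-> r1 r2 ->]]]]] := IH (h :: p) b E hs.
    by exists (Emit :: o1), o2, (h :: w1), w2; rewrite /= r1.
- case: p => [|h p] /=.
  + by move=> h hs; exists [::], o, [::], w.
  + move=> h1 hs; have [o1 [o2 [w1 [w2 [-> r1 r2 ->]]]]] := IH p w h1 hs.
    by exists (Pop :: o1), o2, w1, w2.
Qed.

Lemma split_push (d : Sigma) q o w :
  run [::] o = Some (rcons q d, w) ->
  exists o3 o4 w3 w4, [/\ o = o3 ++ Push d :: o4, run [::] o3 = Some ([::], w3),
    run [:: d] o4 = Some (rcons q d, w4) & w = w3 ++ w4].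
Proof.
elim/last_ind: o q w => [|o x IH] q w.
  by case; case: q.
rewrite -cats1 run_cat; case E: (run [::] o) => [[st1 w1]|] //=.
case: x => [c| |] /=.
- case: q => [|c' q] /= H; case: H => *; subst.
  + by exists o, [::], w1, [::]; rewrite cats0.
  + have [o3 [o4 [w3 [w4 [-> r3 r4 ->]]]]] := IH q w1 E.
    exists o3, (rcons o4 (Push c')), w3, w4; split => //.
    * by rewrite -cats1 -catA.
    * by rewrite -cats1 run_cat r4 /= cats0.
    * by rewrite cats0.
- case: st1 E => [|h t] E //= H; case: H => e1 e2; subst.
  rewrite e1 in E.
  have [o3 [o4 [w3 [w4 [-> r3 r4 ->]]]]] := IH q w1 E.
  exists o3, (rcons o4 Emit), w3, (w4 ++ [:: h]); split => //.
  * by rewrite -cats1 -catA.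
  * by rewrite -cats1 run_cat r4 -e1 /=.
  * by rewrite catA.
- case: st1 E => [|h t] E //= H; case: H => e1 e2; subst.
  have [o3 [o4 [w3 [w4 [-> r3 r4 ->]]]]] := IH (h :: q) w1 E.
  exists o3, (rcons o4 Pop), w3, w4; split => //.
  * by rewrite -cats1 -catA.
  * by rewrite -cats1 run_cat r4 /= cats0.
  * by rewrite cats0.
Qed.

Lemma complete n : forall ops : seq (stack_op Sigma), size ops <= n ->
  (forall w, run [::] ops = Some ([::], w) -> cov F w (size ops)) /\
  (forall d w, run [:: d] ops = Some ([:: d], w) -> cov (T d) w (size ops)).
Proof.
elim: n => [|n IH] ops.
  by case: ops => // _; split => [w|d w] H; case: H => <-; left.
move=> hs; split.
- case: ops hs => [|[e| |] o] //= hs w; first by case=> <-; left.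
  move=> h; have [o1 [o2 [w1 [w2 [eo r1 r2 ->]]]]] := @split_pop [::] e [::] [::] o w h (leqnn 0).
  subst o; rewrite size_cat /= in hs *.
  have c1 := (IH o1 ltac:(lia)).2 e w1 r1.
  have c2 := (IH o2 ltac:(lia)).1 w2 r2.
  have c1' := cov_root F (isT : T e != S) c1; rewrite /= in c1'.
  apply: cov_mono (cov_cat (isT : F != S) c1' c2); lia.
- case: ops hs => [|[e| |] o] //= hs d w; first by case=> <-; left.
  + move=> h; have [o1 [o2 [w1 [w2 [eo r1 r2 ->]]]]] := @split_pop [::] e [:: d] [:: d] o w h (leqnn 1).
    subst o; rewrite size_cat /= in hs *.
    have c1 := (IH o1 ltac:(lia)).2 e w1 r1.
    have c2 := (IH o2 ltac:(lia)).2 d w2 r2.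
    have c1' := cov_root (T d) (isT : T e != S) c1; rewrite /= in c1'.
    apply: cov_mono (cov_cat (isT : T d != S) c1' c2); lia.
  + case E: (run [:: d] o) => [[a b]|] //= [ea <-]; subst a.
    have c2 := (IH o ltac:(lia)).2 d b E.
    have c1 : cov (T d) [:: d] 1.
      right; exists 1 => //; apply: (@der_term _ G _ _ _ _).
      by have := term_in (T d) d; rewrite /tscore eqxx.
    exact: (cov_cat (isT : T d != S) c1 c2).
  + move=> h; have [o3 [o4 [w3 [w4 [eo r3 r4 ->]]]]] := @split_push d [::] o w h.
    subst o; rewrite size_cat /= in hs *.
    have c1 := (IH o3 ltac:(lia)).1 w3 r3.
    have c2 := (IH o4 ltac:(lia)).2 d w4 r4.
    have c1' := cov_root (T d) (isT : F != S) c1; rewrite /= in c1'.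
    apply: cov_mono (cov_cat (isT : T d != S) c1' c2); lia.
Qed.

Definition chr (X : N) ops (w : seq Sigma) := run (bot X) ops = Some (bot X, w).

Lemma sound_chr (X : N) w s : @derives _ G X w s -> exists ops, size ops = s /\ chr X ops w.
Proof.
move=> /sound [ops [h e]]; exists ops; split => //.
by have := e [::]; rewrite cats0.
Qed.

Lemma cov_chr (X : N) ops w : chr X ops w -> cov X w (size ops).
Proof.
case: X => [[d|]|] /= h.
- exact: (complete (leqnn _)).2 d w h.
- exact: (complete (leqnn _)).1 w h.
- have c := (complete (leqnn _)).1 w h.
  by have := cov_root S (isT : F != S) c; rewrite /= addn0.
Qed.

Lemma complete_chr (X : N) ops w : chr X ops w -> w != [::] ->
  exists2 s, s <= size ops & @derives _ G X w s.
Proof. by move=> /cov_chr [->|] //. Qed.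

Lemma remove_letter (st st' : seq Sigma) ops u x v :
  run st ops = Some (st', u ++ x :: v) ->
  exists ops', size ops' < size ops /\ run st ops' = Some (st', u ++ v).
Proof.
elim: ops st u => [|[c| |] o IH] st u /=.
- by case=> _; case: u.
- by move=> /IH [o' [h1 h2]]; exists (Push c :: o').
- case: st => [|h t] //; case E: (run (h :: t) o) => [[a b]|] //= [ea eb]; subst a.
  case: u eb => [|h' u] /= [eh eb]; subst.
  + by exists o.
  + have [o' [h1 h2]] := IH (h' :: t) u E.
    by exists (Emit :: o'); rewrite /= h2.
- case: st => [|h t] // /IH [o' [h1 h2]].
  by exists (Pop :: o'); rewrite /= h2.
Qed.

Definition unit_ops (x : Sigma) := [:: Push x; Emit; Pop].

Lemma ex_min (P : nat -> Prop) n : P n -> exists m, P m /\ forall k, P k -> m <= k.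
Proof.
elim: n {-2}n (leqnn n) => [|n IH] k hk Pk.
  by exists k; split => // j _; move: hk; rewrite leqn0 => /eqP ->.
case: (classic (exists j, j < k /\ P j)) => [[j [hj Pj]]|hno].
  by apply: (IH j) => //; lia.
exists k; split => // j Pj; rewrite leqNgt; apply/negP => hj; apply: hno; by exists j.
Qed.

Lemma flat_run (u : seq Sigma) st :
  run st (flatten [seq unit_ops c | c <- u]) = Some (st, u).
Proof. by elim: u => [|c u IH] //=; rewrite IH. Qed.

Lemma has_min (X : N) u : u != [::] -> exists m, @min_score _ G X u m.
Proof.
move=> hu.
have [s _ d] := complete_chr (X := X) (flat_run u (bot X)) hu.
have [m [hm1 hm2]] := ex_min (P := fun s => @derives _ G X u s) d.
by exists m; split.
Qed.

Lemma close_step (X : N) u v m1 m2 : v != [::] ->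
  @min_score _ G X u m1 -> @min_score _ G X v m2 ->
  (forall ops, chr X ops u -> exists ops', chr X ops' v /\ size ops' <= size ops + 3) ->
  m2 <= m1 + 3.
Proof.
move=> hv [d1 _] [_ h2] tr.
have [ops [e1 c1]] := sound_chr d1.
have [ops' [c' le]] := tr _ c1.
have [s hs d] := complete_chr c' hv.
have := h2 _ d; rewrite -e1; lia.
Qed.

Lemma bdiff : bounded_diff 3 G.
Proof.
move=> X x w hw.
have hw1 : rcons w x != [::] by case: (w).
have hw2 : x :: w != [::] by [].
have [m0 h0] := has_min X hw.
split; right.
- have [m1 h1] := has_min X hw1.
  exists m0, m1; split; [exact: h0 | split; [exact: h1 | split]].
  + apply: (close_step hw h1 h0) => ops c.
    move: c; rewrite /chr -cats1 -[w ++ _]cats0 -catA /= => /remove_letter [o' [h1' h2']].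
    by exists o'; split; [rewrite cats0 in h2' | lia].
  + apply: (close_step hw1 h0 h1) => ops c.
    exists (ops ++ unit_ops x); split; last by rewrite size_cat.
    by rewrite /chr (run_catS _ c) /= cats1.
- have [m1 h1] := has_min X hw2.
  exists m0, m1; split; [exact: h0 | split; [exact: h1 | split]].
  + apply: (close_step hw h1 h0) => ops c.
    move: c; rewrite /chr -[x :: w]cat0s => /remove_letter [o' [h1' h2']].
    by exists o'; split; [ | lia].
  + apply: (close_step hw2 h0 h1) => ops c.
    exists (unit_ops x ++ ops); split; last by rewrite size_cat addnC.
    by rewrite /chr /= c.
Qed.

End Proof.

Lemma G_size (Sigma : finType) : grammar_size (G Sigma) <= 16 * (#|Sigma| + 1) ^ 3.
Proof.
rewrite /grammar_size /= /bins /terms !size_map -!cardE -enumT -cardE card_prod !card_option.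
have le := max_card [pred t : option (option Sigma) * option (option Sigma) * option (option Sigma) |
   (t.1.2 == t.2) && (t.1.2 != None)].
rewrite !card_prod !card_option in le.
move: le; set n := #|Sigma|; move=> le.
rewrite !expnS expn0 muln1.
nia.
Qed.

Lemma compS (Sigma : finType) (ops : seq (stack_op Sigma)) w : generates ops w ->
  exists2 s, s <= size ops & @derives _ (G Sigma) (start (G Sigma)) w s.
Proof.
move=> h; have [->|[s hs d]] := cov_chr (X := None) h.
  by exists 0 => //; apply: (@der_eps _ (G Sigma) 0 erefl).
by exists s.
Qed.

Theorem proposition2 :
  exists (W c k : nat), forall Sigma : finType,
    exists G : scored_cnf Sigma,
      [/\ is_cnf G,
          bounded_diff W G,
          grammar_size G <= c * (#|Sigma| + 1) ^ k
        & forall (sigma : seq Sigma) (m : nat),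
            osg_opt sigma m <-> @min_score _ G (start G) sigma m].
Proof.
exists 3, 16, 3 => Sigma; exists (G Sigma); split.
- by move=> Z X Y s /mem_bin [-> hX _].
- exact: bdiff.
- exact: G_size.
- move=> sigma m; split.
  + move=> [[ops [g e]] hmin].
    have [s hs d] := compS g.
    have [ops' [e' c']] := sound_chr d.
    have := hmin ops' c'; rewrite e' => hm.
    have -> : m = s by apply/eqP; rewrite eqn_leq hm -e hs.
    split => // m' d'.
    have [o2 [e2 c2]] := sound_chr d'.
    by have := hmin o2 c2; rewrite e2; lia.
  + move=> [d hmin]; split.
    * by have [ops [e c]] := sound_chr d; exists ops.
    * move=> ops g; have [s hs d'] := compS g.
      exact: leq_trans (hmin _ d') hs.
Qed.
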